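(* Let $p>3$ be prime, $t\in\{1,3,p,3p\}$, and $1\le r\le 3p-1$ with $\gcd(r,3p)=1$. Then \[\mathsf{c}(V_{3p},a_{3p,r,t})=\begin{cases}\gcd(3p,t) & \text{if } r=1,\\ 3+\frac{3(p-1)}{|r|_p} & \text{if } 1\ne r\equiv1\pmod 3\text{ and } t\in\{3,3p\},\\ 1+\frac{p-1}{|r|_p} & \text{if } 1\ne r\equiv 1\pmod3,\ t\in\{1,p\},\ 3\nmid|r|_p,\\ 1+\frac{3(p-1)}{|r|_p} & \text{if } 1\ne r\equiv1\pmod 3,\ t\in\{1,p\},\ 3\mid|r|_p,\\ 2\gcd(p,t) & \text{if } r\equiv 2\pmod 3\text{ and } r\equiv1\pmod p,\\ 2+\frac{2(p-1)}{|r|_p} & \text{if } r\equiv2\pmod3,\ r\not\equiv1\pmod p,\ |r|_p\text{ odd},\\ 2+\frac{3(p-1)}{|r|_p} & \text{if } r\equiv 2\pmod 3,\ r\not\equiv 1\pmod p,\ |r|_p\text{ even}.\end{cases}\]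
   Context: $\mathrm{D}_{6p}=\langle u,v\mid u^{3p}=1=v^2,\ vuv=u^{-1}\rangle$. For integers $r,t$ with $\gcd(r,3p)=1$, $a_{3p,r,t}$ is the automorphism of $\mathrm{D}_{6p}$ with $u^i\mapsto u^{ri}$, $u^jv\mapsto u^{rj+t}v$. $V_{3p}:=\{u^iv:0\le i\le 3p-1\}$, and $\mathsf{c}(V_{3p},a)$ is the number of cycles (including fixed points) of the permutation induced by $a$ on $V_{3p}$. $|r|_p$ is the multiplicative order of $r$ modulo $p$. *)

(* Defs.v *)
From mathcomp Require Import all_boot.
Set Implicit Arguments. Unset Strict Implicit. Unset Printing Implicit Defensive.

(* Dihedral group D_{2n} = < u, v | u^n = 1 = v^2, v u v = u^-1 >.
   Every element is uniquely u^i (i in Z/n) or u^i v; we encode it as a pair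
   (i, b) : 'I_n * bool, with (i, false) = u^i and (i, true) = u^i v. *)
Definition dih (n : nat) := ('I_n * bool)%type.

(* reduction of k modulo n, as an element of 'I_n (the argument x only
   witnesses 0 < n). *)
Definition modI n (x : 'I_n) (k : nat) : 'I_n :=
  Ordinal (ltn_pmod k (leq_ltn_trans (leq0n x) (ltn_ord x))).

Definition aut (n r t : nat) (x : dih n) : dih n :=
  if x.2 then (modI x.1 (r * x.1 + t), true) else (modI x.1 (r * x.1), false).

Definition Vrefl (n : nat) : pred (dih n) := fun x => x.2.

(* c(V_n, a) : number of cycles (orbits, fixed points included) of the
   permutation induced by a on V_n. *)
Definition ncycles (n : nat) (a : dih n -> dih n) : nat := fcard a (@Vrefl n).

(* |r|_p : multiplicative order of r modulo p (least k > 0 with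
   r^k = 1 mod p; for r coprime to the prime p it is < p). *)
Definition ordmod (p r : nat) : nat :=
  find (fun k => (0 < k) && (r ^ k == 1 %[mod p])) (iota 0 p).

Arguments aut : clear implicits.
Arguments Vrefl : clear implicits.

(* Main.v *)
Require Import Defs.
From mathcomp Require Import all_boot all_order all_algebra.
From mathcomp Require Import finfield.
From mathcomp Require Import ring.
From mathcomp Require Import zify.
Set Implicit Arguments. Unset Strict Implicit. Unset Printing Implicit Defensive.
Import GRing.Theory.

Section Orb.
Variables (T : finType) (f : T -> T).
Hypothesis injf : injective f.

Lemma iter_eq_order x k : (iter k f x == x) = (order f x %| k).
Proof.
set m := order f x.
have m0 : 0 < m := order_gt0 f x.
have iterM q : iter (q * m) f x = x.
  elim: q => [|q IH] //; rewrite mulSn iterD IH; exact: iter_order.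
rewrite {1}(divn_eq k m) addnC iterD iterM /dvdn.
case E: (k %% m) => [|s]; first by rewrite /= !eqxx.
apply/negbTE/eqP => H.
have := @findex_iter _ f x s.+1.
by rewrite -E ltn_mod m0 E H findex0 => /(_ isT).
Qed.

Lemma order_eqL x L : (forall k, (iter k f x == x) = (L %| k)) -> order f x = L.
Proof.
move=> H; apply/eqP; rewrite eqn_dvd -!iter_eq_order H dvdnn /=.
by rewrite -H iter_order.
Qed.

Lemma fcard_piece (a : {pred T}) L : fclosed f a ->
  (forall x, x \in a -> forall k, (iter k f x == x) = (L %| k)) ->
  fcard f a * L = #|a|.
Proof.
move=> cl H; apply: fcard_order_set => //.
by apply/subsetP => x /H /order_eqL; rewrite inE => ->.
Qed.
End Orb.

Lemma n_comp_split (T : finType) (e : rel T) (a b : {pred T}) :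
  n_comp e a = n_comp e [predI a & b] + n_comp e [predI a & [predC b]].
Proof.
rewrite /n_comp_mem.
rewrite -(cardID b (predI (roots e) (mem a))).
congr (_ + _); apply: eq_card => x; rewrite ?inE /=; by case: (roots e x); case: (x \in a); case: (x \in b).
Qed.

Section Aff.
Local Open Scope ring_scope.
Variable K : fieldType.

Lemma iter_aff (rho tau : K) y k : rho != 1 ->
  (iter k (fun y => rho * y + tau) y == y) = (y == tau / (1 - rho)) || (rho ^+ k == 1).
Proof.
move=> r1; set z := tau / (1 - rho).
have r1' : 1 - rho != 0 by rewrite subr_eq0 eq_sym.
have hz : rho * z + tau = z.
  rewrite /z; apply: (mulIf r1'); rewrite mulrDl -mulrA -[tau / _ * _]mulrA mulVf // mulr1.
  by ring.
clearbody z.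
have it j : iter j (fun y => rho * y + tau) y - z = rho ^+ j * (y - z).
  elim: j => [|j IH] /=; first by rewrite expr0 mul1r.
  rewrite exprS -mulrA -IH -[X in _ + tau - X]hz; ring.
rewrite -(inj_eq (addIr (- z))) it -subr_eq0 -{2}(mul1r (y - z)) -mulrBl.
by rewrite mulf_eq0 !subr_eq0 orbC.
Qed.

Lemma iter_aff_fix (rho tau : K) y : rho != 1 -> rho != 0 ->
  (rho * y + tau == tau / (1 - rho)) = (y == tau / (1 - rho)).
Proof.
move=> r1 r0; set z := tau / (1 - rho).
have r1' : 1 - rho != 0 by rewrite subr_eq0 eq_sym.
have hz : rho * z + tau = z.
  rewrite /z; apply: (mulIf r1'); rewrite mulrDl -mulrA -[tau / _ * _]mulrA mulVf // mulr1.
  by ring.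
by rewrite -{1}hz (inj_eq (addIr tau)) (inj_eq (mulfI r0)).
Qed.

Lemma iter_trans (tau : K) y k :
  (iter k (fun y => 1 * y + tau) y == y) = (tau == 0) || (k%:R == 0 :> K).
Proof.
have it : iter k (fun y => 1 * y + tau) y = y + tau *+ k.
  elim: k => [|k IH] /=; first by rewrite addr0.
  by rewrite IH mul1r mulrS -addrA [tau *+ k + tau]addrC.
by rewrite it -[X in _ == X]addr0 (inj_eq (addrI y)) -(mulr_natr tau k) mulf_eq0.
Qed.
End Aff.

Section Fq.
Local Open Scope ring_scope.
Variable q : nat.
Hypothesis hq : prime q.

Lemma Fq_mulI (a b c : 'F_q) : a != 0 -> a * b = a * c -> b = c.
Proof. by move=> a0; apply: mulfI. Qed.

Lemma Fq_eq a b : ((a%:R : 'F_q) == b%:R) = (a == b %[mod q])%N.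
Proof. by rewrite -(inj_eq val_inj) /= !val_Fp_nat. Qed.

Lemma Fq_eq0 a : ((a%:R : 'F_q) == 0) = (q %| a)%N.
Proof. by rewrite -(mulr0n 1) Fq_eq mod0n. Qed.

Lemma Fq_pow_eq1 r k : ((r%:R : 'F_q) ^+ k == 1) = (r ^ k == 1 %[mod q])%N.
Proof. by rewrite -natrX -(mulr1n 1) Fq_eq. Qed.

Lemma ordmod_spec r : ~~ (q %| r)%N ->
  (0 < ordmod q r)%N /\ forall k, ((r%:R : 'F_q) ^+ k == 1) = (ordmod q r %| k)%N.
Proof.
move=> nqr.
have q1 := prime_gt1 hq.
set rho : 'F_q := r%:R.
have r0 : rho != 0 by rewrite Fq_eq0.
have Fer : rho ^+ q.-1 = 1.
  apply: (mulIf r0); rewrite mul1r -exprSr prednK ?(ltnW q1) //.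
  by have := expf_card rho; rewrite card_Fp.
set P := fun k => (0 < k)%N && (r ^ k == 1 %[mod q])%N.
have hasP : has P (iota 0 q).
  apply/hasP; exists q.-1; first by rewrite mem_iota add0n /= prednK ?(ltnW q1) ?leqnn // ltn_predL (ltnW q1).
  by rewrite /P /= -Fq_pow_eq1 -/rho Fer eqxx andbT ltn_predRL.
have oq : (ordmod q r < q)%N by rewrite /ordmod -[X in (_ < X)%N](size_iota 0 q) -has_find.
have Po := nth_find 0%N hasP.
rewrite -/(ordmod q r) nth_iota // add0n in Po.
case/andP: Po => o0 Po; split => // k.
have notP s : (0 < s < ordmod q r)%N -> rho ^+ s != 1.
  case/andP=> s0 so; have := before_find 0%N so.
  rewrite nth_iota ?(ltn_trans so) // add0n /= s0 /= -Fq_pow_eq1 -/rho.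
  by move=> ->.
rewrite {1}(divn_eq k (ordmod q r)) exprD mulnC exprM.
move: Po; rewrite -Fq_pow_eq1 -/rho => /eqP ->; rewrite expr1n mul1r /dvdn.
case E: (k %% ordmod q r)%N => [|s]; first by rewrite expr0 !eqxx.
by rewrite (negbTE (notP s.+1 _)) //= -E ltn_mod o0.
Qed.
Lemma fermat r : ~~ (q %| r)%N -> (r%:R : 'F_q) ^+ q.-1 = 1.
Proof.
move=> nqr; have q1 := prime_gt1 hq.
have r0 : (r%:R : 'F_q) != 0 by rewrite Fq_eq0.
apply: (mulIf r0); rewrite mul1r -exprSr prednK ?(ltnW q1) //.
by have := expf_card (r%:R : 'F_q); rewrite card_Fp.
Qed.
End Fq.


Definition Gq (q n : nat) (x : dih n) : 'F_q := ((x.1 : nat)%:R)%R.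
Definition Fq (q r t : nat) (y : 'F_q) : 'F_q := (r%:R * y + t%:R)%R.
Arguments Fq : clear implicits.
Arguments Gq : clear implicits.

Definition zq (q r t : nat) : 'F_q := ((t%:R : 'F_q) / (1 - r%:R))%R.
Arguments zq : clear implicits.

Section Comp.
Local Open Scope ring_scope.
Variable q : nat.
Hypothesis hq : prime q.

Lemma rq1 r : (r %% q != 1)%N -> (r%:R : 'F_q) != 1.
Proof.
by move=> h; rewrite -(mulr1n 1) Fq_eq // (modn_small (prime_gt1 hq)).
Qed.

Lemma Fq_iter_triv r t a k : (r %% q = 1)%N ->
  (iter k (Fq q r t) a == a) = (q %| t)%N || (q %| k)%N.
Proof.
move=> h.
have e : Fq q r t =1 (fun y => 1 * y + t%:R).
  by move=> y; rewrite /Fq -Fp_nat_mod // h.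
by rewrite (eq_iter e) iter_trans !Fq_eq0.
Qed.

Lemma Fq_iter_fix r t a k : (r %% q != 1)%N ->
  (iter k (Fq q r t) a == a) = (a == zq q r t) || ((r%:R : 'F_q) ^+ k == 1).
Proof. by move=> h; rewrite /Fq iter_aff ?rq1. Qed.

Lemma Fq_fix_inv r t a : (r %% q != 1)%N -> ~~ (q %| r)%N ->
  (Fq q r t a == zq q r t) = (a == zq q r t).
Proof. by move=> h h0; rewrite /Fq iter_aff_fix ?rq1 // Fq_eq0. Qed.

Lemma card_T1 (z : 'F_q) : #|[predI predT & pred1 z]| = 1%N.
Proof. by rewrite -(card1 z); apply: eq_card => x; rewrite !inE. Qed.

Lemma card_TC1 (z : 'F_q) : #|[predI predT & [predC pred1 z]]| = q.-1.
Proof.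
have -> : q.-1 = #|'F_q|.-1 by rewrite card_Fp.
rewrite -(cardC1 z); apply: eq_card => x; by rewrite !inE.
Qed.

Lemma card_TT : #|(predT : pred 'F_q)| = q.
Proof. by rewrite -[RHS](card_Fp hq); apply: eq_card. Qed.
End Comp.

Lemma two_pow k : (2 ^ k %% 3 = if odd k then 2 else 1)%N.
Proof.
elim: k => [|k IH] //; rewrite expnS -modnMmr IH /=.
by case: (odd k).
Qed.

Lemma F3_pow r k : (r %% 3 = 2)%N -> (((r%:R : 'F_3) ^+ k == 1)%R = ~~ odd k).
Proof.
move=> h; rewrite Fq_pow_eq1 // -modnXm h two_pow.
by case: (odd k).
Qed.

Lemma inv_T1 (T : eqType) (F : T -> T) z : (forall a, (F a == z) = (a == z)) ->
  forall a, [predI predT & pred1 z] (F a) = [predI predT & pred1 z] a.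
Proof. by move=> h a; rewrite /= !inE h. Qed.

Lemma inv_TC1 (T : eqType) (F : T -> T) z : (forall a, (F a == z) = (a == z)) ->
  forall a, [predI predT & [predC pred1 z]] (F a) = [predI predT & [predC pred1 z]] a.
Proof. by move=> h a; rewrite /= !inE h. Qed.

Lemma solve_fc fc L N : (0 < L)%N -> (fc * L)%N = N -> fc = (N %/ L)%N.
Proof. by move=> L0 <-; rewrite mulnK. Qed.


Section Dih.
Local Open Scope ring_scope.
Variables p r t : nat.
Hypothesis pp : prime p.
Hypothesis p3 : (3 < p)%N.
Hypothesis cop : coprime r (3 * p).
Local Notation n := (3 * p)%N.
Local Notation f := (aut n r t).
Local Notation G3 := (Gq 3 n).
Local Notation Gp := (Gq p n).
Local Notation F3 := (Fq 3 r t).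
Local Notation Fp := (Fq p r t).

Lemma pr3 : prime 3. Proof. by []. Qed.

Lemma cop3p : coprime 3 p.
Proof.
rewrite coprime_sym prime_coprime //; apply/negP => /dvdn_leq.
by move=> /(_ isT); rewrite leqNgt p3.
Qed.

Lemma nd3r : ~~ (3 %| r)%N.
Proof.
by move: cop; rewrite coprimeMr => /andP[c _]; rewrite -prime_coprime // coprime_sym.
Qed.

Lemma ndpr : ~~ (p %| r)%N.
Proof.
by move: cop; rewrite coprimeMr => /andP[_ c]; rewrite -prime_coprime // coprime_sym.
Qed.

Lemma aut_snd (x : dih n) : (f x).2 = x.2.
Proof. by rewrite /aut; case: x.2. Qed.

Lemma G_aut q (hq : prime q) (qn : (q %| n)%N) x :
  Gq q n (f x) = r%:R * Gq q n x + (if x.2 then t%:R else 0).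
Proof.
rewrite /aut /Gq; case: x => [j b]; case: b => /=;
by rewrite -Fp_nat_mod // modn_dvdm // Fp_nat_mod // ?natrD natrM ?addr0.
Qed.

Lemma q3n : (3 %| n)%N. Proof. exact: dvdn_mulr. Qed.
Lemma qpn : (p %| n)%N. Proof. exact: dvdn_mull. Qed.

Lemma G_inj (x y : dih n) : x.2 = y.2 -> G3 x = G3 y -> Gp x = Gp y -> x = y.
Proof.
case: x => [i b]; case: y => [j c] /= -> /eqP h3 /eqP hp.
rewrite /Gq /= Fq_eq // in h3; rewrite /Gq /= Fq_eq // in hp.
have : (i == j %[mod n])%N by rewrite chinese_remainder ?cop3p // h3 hp.
by rewrite !modn_small // => /eqP /val_inj ->.
Qed.

Lemma r3nz : (r%:R : 'F_3) != 0. Proof. by rewrite Fq_eq0 // nd3r. Qed.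
Lemma rpnz : (r%:R : 'F_p) != 0. Proof. by rewrite Fq_eq0 // ndpr. Qed.

Lemma aut_inj : injective f.
Proof.
move=> x y e.
have e2 : x.2 = y.2 by rewrite -aut_snd e aut_snd.
apply: G_inj => //.
  have := congr1 G3 e; rewrite !G_aut // ?q3n // e2 => /addIr.
  exact: Fq_mulI r3nz.
have := congr1 Gp e; rewrite !G_aut // ?qpn // e2 => /addIr.
exact: Fq_mulI rpnz.
Qed.

Lemma iter_G (x : dih n) k : x.2 ->
  (iter k f x).2 /\ G3 (iter k f x) = iter k F3 (G3 x) /\ Gp (iter k f x) = iter k Fp (Gp x).
Proof.
move=> x2; elim: k => [|k [h2 [h3 hp]]] //=.
by rewrite aut_snd h2 !G_aut // ?q3n ?qpn // h2 h3 hp.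
Qed.

Lemma iter_cond (x : dih n) k : x.2 ->
  (iter k f x == x) = (iter k F3 (G3 x) == G3 x) && (iter k Fp (Gp x) == Gp x).
Proof.
move=> x2; have [h2 [h3 hp]] := iter_G k x2.
apply/eqP/andP => [e | [/eqP e3 /eqP ep]]; first by rewrite -h3 -hp e.
by apply: G_inj; rewrite ?h3 ?hp // h2 x2.
Qed.

Definition A (P3 : pred 'F_3) (Pp : pred 'F_p) : pred (dih n) :=
  [pred x : dih n | x.2 && P3 (G3 x) && Pp (Gp x)].

Lemma closedA P3 Pp : (forall a, P3 (F3 a) = P3 a) -> (forall b, Pp (Fp b) = Pp b) ->
  fclosed f (A P3 Pp).
Proof.
move=> i3 ip x y /eqP <-; rewrite !inE aut_snd !G_aut // ?q3n ?qpn //.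
by case: x.2 => //=; rewrite -i3 -ip.
Qed.

Lemma cardA P3 Pp : #|A P3 Pp| = (#|P3| * #|Pp|)%N.
Proof.
pose H (x : dih n) := (G3 x, Gp x).
pose S := [set x : dih n | x.2].
have injS : {in S &, injective H}.
  move=> x y; rewrite !inE => x2 y2 [e3 ep]; apply: G_inj => //.
  by rewrite x2 y2.
have cardS : #|S| = n.
  have -> : S = setX [set: 'I_n] [set true].
    by apply/setP => -[i b]; rewrite !inE; case: b.
  by rewrite cardsX cardsT card_ord cards1 muln1.
have surj : H @: S = setT.
  apply/eqP; rewrite eqEcard subsetT card_in_imset // cardS cardsT card_prod.
  by rewrite !card_ord (Fp_cast pr3) (Fp_cast pp) leqnn.
pose D := [set x | x \in A P3 Pp].
have -> : #|A P3 Pp| = #|D| by rewrite cardsE.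
have DS : {in D &, injective H}.
  by apply: sub_in2 injS => x; rewrite !inE => /andP[/andP[]].
rewrite -(card_in_imset DS).
have -> : H @: D = setX [set a in P3] [set b in Pp].
  apply/setP => u; rewrite !inE; apply/imsetP/idP.
    by case=> x; rewrite !inE => /andP[/andP[_ h1] h2] ->; apply/andP; split.
  move=> /andP[h1 h2].
  have : u \in H @: S by rewrite surj inE.
  case/imsetP => x; rewrite inE => x2 ux; exists x => //.
  rewrite !inE x2 /= -[G3 x]/(H x).1 -[Gp x]/(H x).2 -ux; exact/andP.
by rewrite cardsX !cardsE.
Qed.

Lemma piece_count (P3 : pred 'F_3) (Pp : pred 'F_p) L :
  (forall a, P3 (F3 a) = P3 a) -> (forall b, Pp (Fp b) = Pp b) ->
  (forall a b, P3 a -> Pp b -> forall k,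
     (iter k F3 a == a) && (iter k Fp b == b) = (L %| k)%N) ->
  (fcard f (A P3 Pp) * L)%N = (#|P3| * #|Pp|)%N.
Proof.
move=> i3 ip H; rewrite -cardA; apply: fcard_piece; first exact: aut_inj.
  exact: closedA.
move=> x; rewrite inE => /andP[/andP[x2 Pa] Pb] k.
by rewrite iter_cond // H.
Qed.

Lemma split3 (P3 : pred 'F_3) (Pp : pred 'F_p) (Q : pred 'F_3) :
  fcard f (A P3 Pp) = (fcard f (A [predI P3 & Q] Pp) + fcard f (A [predI P3 & [predC Q]] Pp))%N.
Proof.
rewrite (n_comp_split _ _ [pred x : dih n | Q (G3 x)]); congr (_ + _);
apply: eq_n_comp_r => x; rewrite !inE /= /in_mem /=; case: (x.2) => //=;
by case: (P3 (G3 x)); case: (Q (G3 x)); case: (Pp (Gp x)).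
Qed.

Lemma splitp (P3 : pred 'F_3) (Pp : pred 'F_p) (Q : pred 'F_p) :
  fcard f (A P3 Pp) = (fcard f (A P3 [predI Pp & Q]) + fcard f (A P3 [predI Pp & [predC Q]]))%N.
Proof.
rewrite (n_comp_split _ _ [pred x : dih n | Q (Gp x)]); congr (_ + _);
apply: eq_n_comp_r => x; rewrite !inE /= /in_mem /=; case: (x.2) => //=;
by case: (P3 (G3 x)); case: (Q (Gp x)); case: (Pp (Gp x)).
Qed.

Lemma ncyclesA : ncycles f = fcard f (A predT predT).
Proof. by apply: eq_n_comp_r => x; rewrite !inE /= /in_mem /= /Vrefl !andbT. Qed.


Lemma n3p : ~~ (3 %| p)%N.
Proof. by rewrite -prime_coprime // cop3p. Qed.
Lemma np3 : ~~ (p %| 3)%N.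
Proof. apply/negP => /dvdn_leq. by move=> /(_ isT); rewrite leqNgt p3. Qed.
Lemma np1 : ~~ (p %| 1)%N.
Proof. by rewrite dvdn1; apply/negP => /eqP e; move: p3; rewrite e. Qed.
Lemma p0 : (0 < p)%N. Proof. exact: prime_gt0. Qed.
Lemma n0 : (0 < n)%N. Proof. by rewrite muln_gt0 p0. Qed.

Lemma case1 : (r %% 3 = 1)%N -> (r %% p = 1)%N -> t \in [:: 1; 3; p; 3 * p]%N ->
  ncycles f = gcdn n t.
Proof.
move=> h3 hp ht; rewrite ncyclesA.
have PC L : (forall k, ((3 %| t) || (3 %| k)) && ((p %| t) || (p %| k)) = (L %| k))%N ->
    (0 < L)%N -> fcard f (A predT predT) = (n %/ L)%N.
  move=> HL L0; apply: solve_fc => //.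
  rewrite (@piece_count predT predT L) //; first by rewrite (card_TT pr3) (card_TT pp).
  by move=> a b _ _ k; rewrite Fq_iter_triv // Fq_iter_triv // HL.
move: ht; rewrite !inE => /or4P [] /eqP et.
- have -> : fcard f (A predT predT) = (n %/ n)%N.
    apply: PC; last exact: n0.
    by move=> k; rewrite et (negbTE np1) /= Gauss_dvd ?cop3p.
  by rewrite divnn n0 et gcdn1.
- have -> : fcard f (A predT predT) = (n %/ p)%N.
    apply: PC; last exact: p0.
    by move=> k; rewrite et dvdnn (negbTE np3).
  by rewrite mulnK ?p0 // et gcdnC gcdnMr.
- have -> : fcard f (A predT predT) = (n %/ 3)%N.
    apply: PC => // k.
    by rewrite et dvdnn (negbTE n3p) /= andbT.
  by rewrite mulKn // et gcdnC gcdnMl.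
- have -> : fcard f (A predT predT) = (n %/ 1)%N.
    apply: PC => // k.
    by rewrite et dvdn_mulr // dvdn_mull // dvd1n.
  by rewrite divn1 et gcdnn.
Qed.

Lemma count_p (P3 : pred 'F_3) (c3 : nat -> bool) L1 L2 :
  (r %% p != 1)%N -> (forall a, P3 (F3 a) = P3 a) ->
  (forall a k, P3 a -> (iter k F3 a == a) = c3 k) ->
  (forall k, c3 k = (L1 %| k)%N) ->
  (forall k, c3 k && (ordmod p r %| k)%N = (L2 %| k)%N) ->
  (0 < L1)%N -> (0 < L2)%N ->
  fcard f (A P3 predT) = (#|P3| %/ L1 + (#|P3| * p.-1) %/ L2)%N.
Proof.
move=> hp i3 hc3 H1 H2 L10 L20.
have [o0 ho] := ordmod_spec pp ndpr.
have fi : forall b, (Fp b == zq p r t) = (b == zq p r t).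
  by move=> b; exact: (Fq_fix_inv pp t b hp ndpr).
rewrite (splitp P3 predT (pred1 (zq p r t))); congr (_ + _); apply: solve_fc => //.
- rewrite (@piece_count P3 [predI predT & pred1 (zq p r t)] L1 i3 (inv_T1 fi)).
    by rewrite card_T1 muln1.
  move=> a b Pa; rewrite /= inE => /eqP -> k.
  by rewrite hc3 // Fq_iter_fix // eqxx /= andbT H1.
- rewrite (@piece_count P3 [predI predT & [predC pred1 (zq p r t)]] L2 i3 (inv_TC1 fi)).
    by rewrite (card_TC1 pp).
  move=> a b Pa; rewrite /= !inE => /negbTE bz k.
  by rewrite hc3 // Fq_iter_fix // bz /= ho H2.
Qed.

Lemma hc3_triv : (r %% 3 = 1)%N ->
  forall (a : 'F_3) k, predT a -> (iter k F3 a == a) = (3 %| t)%N || (3 %| k)%N.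
Proof. by move=> h a k _; rewrite Fq_iter_triv. Qed.

Lemma case2a : (r %% 3 = 1)%N -> (r %% p != 1)%N -> t \in [:: 3; 3 * p]%N ->
  ncycles f = (3 + (3 * (p - 1)) %/ ordmod p r)%N.
Proof.
move=> h3 hp ht; have [o0 ho] := ordmod_spec pp ndpr.
have t3 : (3 %| t)%N by move: ht; rewrite !inE => /orP[] /eqP ->; rewrite ?dvdn_mulr.
rewrite ncyclesA (@count_p predT (fun _ => true) 1 (ordmod p r)) //.
- by rewrite (card_TT pr3) divn1 subn1.
- by move=> a k _; rewrite Fq_iter_triv // t3.
- by move=> k; rewrite dvd1n.
Qed.

Lemma case2b : (r %% 3 = 1)%N -> (r %% p != 1)%N -> t \in [:: 1; p]%N ->
  ~~ (3 %| ordmod p r)%N ->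
  ncycles f = (1 + (p - 1) %/ ordmod p r)%N.
Proof.
move=> h3 hp ht h3o; have [o0 ho] := ordmod_spec pp ndpr.
have t3 : ~~ (3 %| t)%N by move: ht; rewrite !inE => /orP[] /eqP ->; rewrite ?n3p.
rewrite ncyclesA (@count_p predT (fun k => (3 %| k)%N) 3 (3 * ordmod p r)) //.
- by rewrite (card_TT pr3) divnn divnMl // subn1.
- by move=> a k _; rewrite Fq_iter_triv // (negbTE t3).
- by move=> k; rewrite Gauss_dvd // prime_coprime.
- by rewrite muln_gt0.
Qed.

Lemma case2c : (r %% 3 = 1)%N -> (r %% p != 1)%N -> t \in [:: 1; p]%N ->
  (3 %| ordmod p r)%N ->
  ncycles f = (1 + (3 * (p - 1)) %/ ordmod p r)%N.
Proof.
move=> h3 hp ht h3o; have [o0 ho] := ordmod_spec pp ndpr.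
have t3 : ~~ (3 %| t)%N by move: ht; rewrite !inE => /orP[] /eqP ->; rewrite ?n3p.
rewrite ncyclesA (@count_p predT (fun k => (3 %| k)%N) 3 (ordmod p r)) //.
- by rewrite (card_TT pr3) divnn subn1.
- by move=> a k _; rewrite Fq_iter_triv // (negbTE t3).
- move=> k; apply/andP/idP => [[] //|h]; split => //.
  exact: dvdn_trans h3o h.
Qed.

Lemma o_dvd : (ordmod p r %| p.-1)%N.
Proof. by have [_ ho] := ordmod_spec pp ndpr; rewrite -ho fermat // ndpr. Qed.

Lemma hc3_z : (r %% 3 = 2)%N -> forall (a : 'F_3) k,
  [predI predT & pred1 (zq 3 r t)] a -> (iter k F3 a == a) = true.
Proof. by move=> h a k; rewrite /= inE => /eqP ->; rewrite Fq_iter_fix ?h ?eqxx. Qed.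

Lemma hc3_nz : (r %% 3 = 2)%N -> forall (a : 'F_3) k,
  [predI predT & [predC pred1 (zq 3 r t)]] a -> (iter k F3 a == a) = (2 %| k)%N.
Proof.
move=> h a k; rewrite /= !inE => /negbTE az.
by rewrite Fq_iter_fix ?h // az /= F3_pow // dvdn2.
Qed.

Lemma fi3 : (r %% 3 = 2)%N -> forall a, (F3 a == zq 3 r t) = (a == zq 3 r t).
Proof. by move=> h a; rewrite Fq_fix_inv // ?h // nd3r. Qed.

Lemma count_p1 (P3 : pred 'F_3) (c3 : nat -> bool) L :
  (r %% p = 1)%N -> (forall a, P3 (F3 a) = P3 a) ->
  (forall a k, P3 a -> (iter k F3 a == a) = c3 k) ->
  (forall k, c3 k && ((p %| t) || (p %| k))%N = (L %| k)%N) -> (0 < L)%N ->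
  fcard f (A P3 predT) = ((#|P3| * p) %/ L)%N.
Proof.
move=> hp i3 hc3 H L0; apply: solve_fc => //.
rewrite (@piece_count P3 predT L i3) //; first by rewrite (card_TT pp).
by move=> a b Pa _ k; rewrite hc3 // Fq_iter_triv // H.
Qed.

Lemma case3 : (r %% 3 = 2)%N -> (r %% p = 1)%N -> t \in [:: 1; 3; p; 3 * p]%N ->
  ncycles f = (2 * gcdn p t)%N.
Proof.
move=> h3 hp ht.
have c2p : coprime 2 p.
  rewrite coprime_sym prime_coprime //; apply/negP => /dvdn_leq.
  by move=> /(_ isT) h; move: p3; rewrite ltnNge (leq_trans h).
rewrite ncyclesA (split3 predT predT (pred1 (zq 3 r t))).
have [pt|pt] := boolP (p %| t)%N.
  rewrite (@count_p1 _ (fun _ => true) 1) //; last 3 first.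
  - exact: inv_T1 (fi3 h3).
  - exact: hc3_z.
  - by move=> k; rewrite pt dvd1n.
  rewrite (@count_p1 _ (fun k => 2 %| k)%N 2) //; last 3 first.
  - exact: inv_TC1 (fi3 h3).
  - exact: hc3_nz.
  - by move=> k; rewrite pt andbT.
  rewrite card_T1 (card_TC1 pr3) mul1n divn1 mulKn // addnn -mul2n.
  move: ht pt; rewrite !inE => /or4P[] /eqP ->.
  - by rewrite (negbTE np1).
  - by rewrite (negbTE np3).
  - by rewrite gcdnn.
  - by rewrite gcdnMl.
rewrite (@count_p1 _ (fun _ => true) p) //; last 4 first.
- exact: inv_T1 (fi3 h3).
- exact: hc3_z.
- by move=> k; rewrite (negbTE pt).
- exact: p0.
rewrite (@count_p1 _ (fun k => 2 %| k)%N (2 * p)) //; last 4 first.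
- exact: inv_TC1 (fi3 h3).
- exact: hc3_nz.
- by move=> k; rewrite (negbTE pt) Gauss_dvd.
- by rewrite muln_gt0 p0.
rewrite card_T1 (card_TC1 pr3) mul1n !divnn p0 muln_gt0 p0 /=.
move: ht pt; rewrite !inE => /or4P[] /eqP ->.
- by rewrite gcdn1.
- have : coprime p 3 by rewrite prime_coprime // np3.
  by rewrite /coprime => /eqP ->.
- by rewrite dvdnn.
- by rewrite dvdn_mull.
Qed.

Lemma case4 : (r %% 3 = 2)%N -> (r %% p != 1)%N ->
  (odd (ordmod p r) -> ncycles f = (2 + (2 * (p - 1)) %/ ordmod p r)%N) /\
  (~~ odd (ordmod p r) -> ncycles f = (2 + (3 * (p - 1)) %/ ordmod p r)%N).
Proof.
move=> h3 hp; have [o0 ho] := ordmod_spec pp ndpr.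
set o := ordmod p r in o0 ho *.
have [m hm] : exists m, p.-1 = (m * o)%N by exists (p.-1 %/ o)%N; rewrite divnK // o_dvd.
have P1 : fcard f (A [predI predT & pred1 (zq 3 r t)] predT) = (1 + m)%N.
  rewrite (@count_p _ (fun _ => true) 1 o) //.
  - by rewrite card_T1 divn1 mul1n hm mulnK.
  - exact: inv_T1 (fi3 h3).
  - exact: hc3_z.
  - by move=> k; rewrite dvd1n.
have P2 L : (forall k, (2 %| k)%N && (o %| k)%N = (L %| k)%N) -> (0 < L)%N ->
    fcard f (A [predI predT & [predC pred1 (zq 3 r t)]] predT) = (1 + (2 * (m * o)) %/ L)%N.
  move=> HL L0; rewrite (@count_p _ (fun k => 2 %| k)%N 2 L) //.
  - by rewrite (card_TC1 pr3) hm.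
  - exact: inv_TC1 (fi3 h3).
  - exact: hc3_nz.
rewrite subn1 hm; split => ho2; rewrite ncyclesA (split3 predT predT (pred1 (zq 3 r t))) P1.
- rewrite (P2 (2 * o)%N).
  + rewrite mulnCA mulnK ?muln_gt0 // mulnA mulnK //. 
    lia.
  + by move=> k; rewrite Gauss_dvd // coprime2n.
  + by rewrite muln_gt0.
- rewrite (P2 o) //.
  + rewrite mulnA mulnK // mulnA mulnK //.
    lia.
  + move=> k; apply/andP/idP => [[] //|h]; split => //.
    by apply: dvdn_trans h; rewrite dvdn2.
Qed.

End Dih.

Unset Implicit Arguments.

Theorem lemma5p10 (p t r : nat) :
  prime p -> 3 < p ->
  t \in [:: 1; 3; p; 3 * p] ->
  1 <= r <= 3 * p - 1 -> coprime r (3 * p) ->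
  let c := ncycles (aut (3 * p) r t) in
  let o := ordmod p r in
  (r = 1 -> c = gcdn (3 * p) t)
  /\ (r != 1 -> r %% 3 = 1 -> t \in [:: 3; 3 * p] ->
        c = 3 + (3 * (p - 1)) %/ o)
  /\ (r != 1 -> r %% 3 = 1 -> t \in [:: 1; p] -> ~~ (3 %| o) ->
        c = 1 + (p - 1) %/ o)
  /\ (r != 1 -> r %% 3 = 1 -> t \in [:: 1; p] -> 3 %| o ->
        c = 1 + (3 * (p - 1)) %/ o)
  /\ (r %% 3 = 2 -> r %% p = 1 -> c = 2 * gcdn p t)
  /\ (r %% 3 = 2 -> r %% p != 1 -> odd o -> c = 2 + (2 * (p - 1)) %/ o)
  /\ (r %% 3 = 2 -> r %% p != 1 -> ~~ odd o -> c = 2 + (3 * (p - 1)) %/ o).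
Proof.
move=> pp p3 ht hr cop c o; rewrite {}/c {}/o.
have p1 : 1 < p by apply: ltn_trans p3.
have rp1 : r != 1 -> r %% 3 = 1 -> r %% p != 1.
  move=> rn1 r3; apply/negP => /eqP rp; move/negP: rn1; apply.
  have rlt : r < 3 * p.
    case/andP: hr => _ h; lia.
  have : r == 1 %[mod 3 * p].
    by rewrite chinese_remainder ?cop3p // r3 rp (modn_small p1).
  rewrite (modn_small rlt) modn_small //; lia.
split; first by move=> r1; subst r; apply: case1 => //; rewrite modn_small.
split; first by move=> rn1 r3; apply: case2a => //; apply: rp1.
split; first by move=> rn1 r3; apply: case2b => //; apply: rp1.
split; first by move=> rn1 r3; apply: case2c => //; apply: rp1.
split; first by move=> r3 rp; exact: (case3 pp p3 cop r3 rp ht).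
split; move=> r3 rp; have [h1 h2] := case4 t pp p3 cop r3 rp; assumption.
Qed.
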